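(* Let $\varphi:\mathbb R\to\mathbb R$ be concave. Assume only upper-bound group constraints (with $\mathcal S\neq\emptyset$) and let $F$ be a maxmin-fair distribution over $\mathcal S$ for satisfaction $A=V$. Then for every probability distribution $D$ over $\mathcal S$, $$\sum_{u\in\mathcal U}\varphi(F[u])\ \ge\ \sum_{u\in\mathcal U}\varphi(D[u]).$$
   Context: Ranking setting: $\mathcal U=\{u_1,\dots,u_n\}$ finite set of individuals partitioned into groups $C_1,\dots,C_t$; $R:\mathcal U\to\mathbb R$ relevance with distinct values; rankings are bijections $r:\mathcal U\to[n]$. Only upper bounds: $\mathcal S=\{r:\ |\{u\in C_k: r(u)\le i\}|\le u_i^k\ \forall i\in[n],k\in[t]\}$ for given integers $u_i^k$. Value function $V(r,u)=f(r(u))-g(u)$ with $f:[n]\to\mathbb R$ non-increasing and $g:\mathcal U\to\mathbb R$ satisfying $R(u)\ge R(v)\Rightarrow g(u)\ge g(v)$. For a distribution $D$ over $\mathcal S$, $D[u]=\mathbb E_{r\sim D}[V(r,u)]$. $F$ is maxmin-fair if for every distribution $D$ over $\mathcal S$ and every $u$: $D[u]>F[u]$ implies there is $v$ with $D[v]<F[v]\le F[u]$. *)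

(* Defs.v *)
From HB Require Import structures.
From mathcomp Require Import all_boot all_order all_algebra.
Set Implicit Arguments. Unset Strict Implicit. Unset Printing Implicit Defensive.
Import Order.TTheory GRing.Theory Num.Theory.
Local Open Scope ring_scope.

(* A ranking of the finite set U of individuals: a map U -> {0,..,n-1},
   n = #|U|; the rank (in [n] = {1..n}) of u is (r u).+1.  Rankings are
   the bijective ones, i.e. the injective ones (injectiveb). *)
Definition ranking (U : finType) := {ffun U -> 'I_#|U|}.

Definition rk (U : finType) (r : ranking U) (u : U) : nat := (nat_of_ord (r u)).+1.

(* Groups C_1..C_t are given by a map grp : U -> 'I_t (a partition). *)
Definition feasible (U : finType) (t : nat) (grp : U -> 'I_t)
  (ub : nat -> 'I_t -> int) (r : ranking U) : bool :=
  injectiveb r &&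
  [forall i : 'I_#|U|, forall k : 'I_t,
     (#|[set u | (grp u == k) && (rk r u <= i.+1)%N]|%:Z <= ub i.+1 k)].

Definition value (R : realFieldType) (U : finType) (f : nat -> R) (g : U -> R)
  (r : ranking U) (u : U) : R := f (rk r u) - g u.

Definition distr_over (R : realFieldType) (U : finType) (S : pred (ranking U))
  (D : {ffun ranking U -> R}) : Prop :=
  (forall r, 0 <= D r) /\ (\sum_(r : ranking U) D r = 1) /\
  (forall r, D r != 0 -> S r).

Definition expv (R : realFieldType) (U : finType) (f : nat -> R) (g : U -> R)
  (D : {ffun ranking U -> R}) (u : U) : R :=
  \sum_(r : ranking U) D r * value f g r u.

Definition maxmin_fair (R : realFieldType) (U : finType) (S : pred (ranking U))
  (f : nat -> R) (g : U -> R) (F : {ffun ranking U -> R}) : Prop :=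
  forall D, distr_over S D -> forall u,
    expv f g F u < expv f g D u ->
    exists v, expv f g D v < expv f g F v /\ expv f g F v <= expv f g F u.

Definition concave (R : realFieldType) (phi : R -> R) : Prop :=
  forall (x y lam : R), 0 <= lam -> lam <= 1 ->
    lam * phi x + (1 - lam) * phi y <= phi (lam * x + (1 - lam) * y).

(* Main.v *)
Require Import Defs.
From HB Require Import structures.
From mathcomp Require Import all_boot all_order all_algebra.
From mathcomp Require Import ring lra zify.
Import Order.TTheory GRing.Theory Num.Theory.
Set Implicit Arguments. Unset Strict Implicit. Unset Printing Implicit Defensive.
Local Open Scope ring_scope.

Lemma exists_max (R : realFieldType) (U : finType) (x : U -> R) (A : {set U}) (w0 : U) :
  w0 \in A -> exists2 w, w \in A & forall u, u \in A -> x u <= x w.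
Proof.
move=> w0A.
case: (arg_maxP x w0A) => w wA H.
by exists w => // u uA; apply: H.
Qed.

Lemma sep_exists (R : realFieldType) (ls us : seq R) :
  (forall a b, a \in ls -> b \in us -> a <= b) ->
  exists c, (forall a, a \in ls -> a <= c) /\ (forall b, b \in us -> c <= b).
Proof.
elim: ls => [|a ls IH] H.
  elim: us {H} => [|b us IH]; first by exists 0.
  case: IH => c [_ Hc]. exists (Num.min b c); split => // b'.
  rewrite inE => /orP [/eqP ->|bin]; first by rewrite ge_min lexx.
  by rewrite ge_min Hc // orbT.
case: IH => [a' b a'in bin|c [H1 H2]].
  by apply: H => //; rewrite inE a'in orbT.
exists (Num.max a c); split => [a'|b bin].
  rewrite inE => /orP [/eqP ->|a'in]; first by rewrite le_max lexx.
  by rewrite le_max H1 // orbT.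
rewrite ge_max H2 // andbT; apply: H => //; by rewrite inE eqxx.
Qed.

Lemma LL (R : realFieldType) (U : finType) (x c d : U -> R) (n : nat) (A : {set U}) :
  (#|A| <= n)%N ->
  (forall u, u \in A -> 0 <= c u) ->
  (forall u v, u \in A -> v \in A -> x u <= x v -> c v <= c u) ->
  (forall w, w \in A -> \sum_(u in A | x u <= x w) d u <= 0) ->
  \sum_(u in A) c u * d u <= 0.
Proof.
elim: n A c => [|n IH] A c hA hc hm hd.
  move: hA; rewrite leqn0 cards_eq0 => /eqP ->.
  by rewrite big_set0.
case: (set_0Vmem A) => [->|[w0 w0A]]; first by rewrite big_set0.
case: (exists_max x w0A) => w wA wmax.
pose A' := [set u in A | x u < x w].
have eA : \sum_(u in A) c u * d u =
   \sum_(u in A) (c u - c w) * d u + c w * \sum_(u in A) d u.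
  rewrite mulr_sumr -big_split /=; apply: eq_bigr => u _; ring.
have e2 : \sum_(u in A) (c u - c w) * d u = \sum_(u in A') (c u - c w) * d u.
  rewrite (bigID (fun u => x u < x w)) /= [X in _ + X]big1 ?addr0.
    by apply: eq_bigl => u; rewrite inE.
  move=> u /andP [uA]; rewrite -leNgt => le.
  have -> : c u = c w.
    apply/eqP; rewrite eq_le; apply/andP; split; first exact: hm.
    by apply: hm => //; apply: wmax.
  by rewrite subrr mul0r.
have sA : \sum_(u in A) d u <= 0.
  have := hd w wA. congr (_ <= _).
  by apply: eq_bigl => u; case uA: (u \in A) => //=; rewrite wmax.
rewrite eA e2.
have h1 : \sum_(u in A') (c u - c w) * d u <= 0.
  apply: (IH A' (fun u => c u - c w)).
  - have : A' \proper A.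
      apply/properP; split; first by apply/subsetP => u; rewrite inE => /andP [].
      by exists w => //; rewrite inE wA ltxx.
    move/proper_card => lt; rewrite -ltnS; exact: leq_trans lt hA.
  - move=> u; rewrite inE => /andP [uA _]; rewrite subr_ge0.
    by apply: hm => //; apply: wmax.
  - move=> u v; rewrite !inE => /andP [uA _] /andP [vA _] le.
    by rewrite lerD2r; apply: hm.
  - move=> w'; rewrite inE => /andP [w'A lt].
    have := hd w' w'A; congr (_ <= _); apply: eq_bigl => u.
    rewrite inE; case uA: (u \in A) => //=.
    case le: (x u <= x w') => //=.
    by rewrite andbT (le_lt_trans le lt).
  by rewrite andbF.
have h2 : c w * \sum_(u in A) d u <= 0.
  by rewrite mulr_ge0_le0 // hc.
lra.
Qed.

Definition slope (R : realFieldType) (phi : R -> R) (a b : R) := (phi b - phi a) / (b - a).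
Lemma three_chord (R : realFieldType) (phi : R -> R) (a b c : R) :
  concave phi -> a < b -> b < c -> slope phi b c <= slope phi a b.
Proof.
move=> hc ab bc.
have ca : 0 < c - a by lra.
have cb : 0 < c - b by lra.
have ba : 0 < b - a by lra.
pose lam := (c - b) / (c - a).
have l0 : 0 <= lam by rewrite /lam divr_ge0 // ltW.
have l1 : lam <= 1 by rewrite /lam ler_pdivrMr // mul1r; lra.
have := hc a c lam l0 l1.
have -> : lam * a + (1 - lam) * c = b.
  rewrite /lam; field; lra.
have e1 : 1 - lam = (b - a) / (c - a) by rewrite /lam; field; lra.
rewrite e1 /lam => h.
have h2 : (c - b) * phi a + (b - a) * phi c <= (c - a) * phi b.
  have e2 : (c - b) / (c - a) * phi a + (b - a) / (c - a) * phi c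
            = ((c - b) * phi a + (b - a) * phi c) / (c - a) by field; lra.
  by move: h; rewrite e2 ler_pdivrMr // [phi b * _]mulrC.
rewrite /slope ler_pdivrMr // mulrAC ler_pdivlMr //.
nra.
Qed.

Lemma stepB (R : realFieldType) (U : finType) (phi : R -> R) (x y : U -> R) :
  concave phi -> \sum_u y u = \sum_u x u ->
  (forall w, \sum_(u | x u <= x w) y u <= \sum_(u | x u <= x w) x u) ->
  \sum_u phi (y u) <= \sum_u phi (x u).
Proof.
move=> hc hsum hpre.
case: (boolP [exists u : U, true]) => [/existsP [w0 _]|/existsPn hne]; last first.
  by rewrite !big1 // => u; have := hne u.
pose ts := [seq x w | w <- enum U] ++ [seq y w | w <- enum U].
pose P lam c := all (fun t => ((lam < t) ==> (slope phi lam t <= c)) &&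
                             ((t < lam) ==> (c <= slope phi t lam))) ts.
have exP : forall lam, exists c, P lam c.
  move=> lam.
  have := @sep_exists R [seq slope phi lam t | t <- ts & lam < t]
                         [seq slope phi t lam | t <- ts & t < lam].
  case.
    move=> a b /mapP [t1 + ->] /mapP [t2 + ->].
    rewrite !mem_filter => /andP [l1 _] /andP [l2 _].
    exact: three_chord.
  move=> c [H1 H2].
  exists c; apply/allP => t tin /=; apply/andP; split; apply/implyP => lt.
    by apply: H1; apply: map_f; rewrite mem_filter lt.
  by apply: H2; apply: map_f; rewrite mem_filter lt.
pose C lam := xchoose (exP lam).
have CP : forall lam, P lam (C lam) by move=> lam; exact: xchooseP.
have xin : forall w, x w \in ts by move=> w; rewrite mem_cat map_f ?mem_enum.
have yin : forall w, y w \in ts by move=> w; rewrite mem_cat map_f ?mem_enum ?orbT.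
have CPt : forall lam t, t \in ts ->
    ((lam < t) -> slope phi lam t <= C lam) /\ ((t < lam) -> C lam <= slope phi t lam).
  move=> lam t tin; have := allP (CP lam) t tin => /andP [/implyP h1 /implyP h2].
  by split.
have sg : forall u, phi (y u) <= phi (x u) + C (x u) * (y u - x u).
  move=> u; case: (ltgtP (y u) (x u)) => [lt|lt|->]; last by rewrite subrr mulr0 addr0.
  - have [_ h] := CPt (x u) (y u) (yin u); have := h lt.
    rewrite /slope ler_pdivlMr ?subr_gt0 // => h'. nra.
  - have [h _] := CPt (x u) (y u) (yin u); have := h lt.
    rewrite /slope ler_pdivrMr ?subr_gt0 // => h'. nra.
have Cmono : forall u v, x u <= x v -> C (x v) <= C (x u).
  move=> u v; rewrite le_eqVlt => /orP [/eqP ->//|lt].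
  have [h1 _] := CPt (x u) (x v) (xin v).
  have [_ h2] := CPt (x v) (x u) (xin u).
  exact: le_trans (h2 lt) (h1 lt).
case: (exists_max x (in_setT w0)) => wm _ wmax.
pose c u := C (x u) - C (x wm).
pose d u := y u - x u.
have hLL : \sum_(u in [set: U]) c u * d u <= 0.
  apply: (@LL R U x c d #|[set: U]|) => //.
  - move=> u _; rewrite subr_ge0; apply: Cmono; exact: wmax.
  - by move=> u v _ _ le; rewrite lerD2r; apply: Cmono.
  - move=> w _.
    rewrite (eq_bigl (fun u => x u <= x w)) => [|u]; last by rewrite in_setT.
    by rewrite /d sumrB subr_le0.
have e1 : \sum_u c u * d u = \sum_u C (x u) * d u.
  rewrite /c.
  have -> : \sum_u (C (x u) - C (x wm)) * d u
      = \sum_u C (x u) * d u - C (x wm) * \sum_u d u.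
    by rewrite mulr_sumr -sumrB; apply: eq_bigr => u _; ring.
  by rewrite /d sumrB hsum subrr mulr0 subr0.
have : \sum_u phi (y u) <= \sum_u (phi (x u) + C (x u) * d u).
  by apply: ler_sum => u _; apply: sg.
rewrite big_split /= -e1.
have : \sum_u c u * d u <= 0.
  by move: hLL; congr (_ <= _); apply: eq_bigl => u; rewrite in_setT.
lra.
Qed.
Definition tp (U : eqType) (u v w : U) := if w == u then v else if w == v then u else w.

Lemma tpK (U : eqType) (u v : U) : involutive (tp u v).
Proof.
move=> w; rewrite /tp.
case: (eqVneq w u) => [->|wu]; first by rewrite eqxx; case: (eqVneq v u) => [->|]; rewrite ?eqxx.
case: (eqVneq w v) => [->|wv]; first by rewrite eqxx.
by rewrite (negPf wu) (negPf wv).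
Qed.

Definition swapr (U : finType) (r : ranking U) (u v : U) : ranking U :=
  [ffun w => r (tp u v w)].

Definition cnt (U : finType) (t : nat) (grp : U -> 'I_t) (r : ranking U) (k : 'I_t) (j : nat) :=
  #|[set w | (grp w == k) && (rk r w <= j)%N]|.

Lemma feasP (U : finType) (t : nat) (grp : U -> 'I_t) (ub : nat -> 'I_t -> int) (r : ranking U) :
  feasible grp ub r <->
  injective r /\ forall j k, (0 < j <= #|U|)%N -> (cnt grp r k j)%:Z <= ub j k.
Proof.
rewrite /feasible; split.
  case/andP => /injectiveP ir /forallP H; split => // j k /andP [j0 jn].
  case: j j0 jn => // j _ jn.
  by have /forallP /(_ k) := H (Ordinal jn).
move=> [ir H]; apply/andP; split; first exact/injectiveP.
apply/forallP => i; apply/forallP => k; apply: H.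
by rewrite /= ltn_ord.
Qed.

Lemma swapE (U : finType) (r : ranking U) u v w : swapr r u v w = r (tp u v w).
Proof. by rewrite ffunE. Qed.

Lemma swap_inj (U : finType) (r : ranking U) u v : injective r -> injective (swapr r u v).
Proof.
move=> ir w1 w2; rewrite !swapE => /ir h.
by rewrite -(tpK u v w1) h tpK.
Qed.

Lemma swap_sub (U : finType) (t : nat) (grp : U -> 'I_t) (r : ranking U) u v m j w :
  (r v < r u)%N ->
  w \in [set w | (grp w == m) && (rk (swapr r u v) w <= j)%N] ->
  w \in [set w | (grp w == m) && (rk r w <= j)%N] \/
  (w = u /\ grp u = m /\ (r v < j <= r u)%N).
Proof.
move=> vu; rewrite !inE /rk swapE /tp => /andP [].
case: (eqVneq w u) => [->|wu] gm lt.
  case: (ltnP (r u) j) => h; first by left; rewrite gm.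
  by right; split => //; split; [exact/eqP | rewrite lt].
case: (eqVneq w v) lt => [ev|wv] lt; last by left; rewrite gm lt.
by left; rewrite gm ev (ltn_trans vu lt).
Qed.

Lemma swap_feas_up (U : finType) (t : nat) (grp : U -> 'I_t) (ub : nat -> 'I_t -> int)
  (r : ranking U) u v :
  feasible grp ub r -> (r v < r u)%N ->
  (forall j, (r v < j <= r u)%N -> ((cnt grp r (grp u) j).+1)%:Z <= ub j (grp u)) ->
  feasible grp ub (swapr r u v).
Proof.
move=> /feasP [ir H] vu Hj; apply/feasP; split; first exact: swap_inj.
move=> j m jr.
case: (boolP ((grp u == m) && (r v < j <= r u)%N)) => [/andP [/eqP gm rng]|nc].
  rewrite -gm; apply: (le_trans _ (Hj j rng)); rewrite lez_nat /cnt.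
  set Sr := [set w | _ & (rk r w <= j)%N].
  apply: (@leq_trans #|u |: Sr|); last by rewrite cardsU1; case: (u \in Sr).
  apply: subset_leq_card; apply/subsetP => w win.
  case: (swap_sub vu win) => [h|[-> _]]; rewrite !inE ?eqxx //.
  by move: h; rewrite inE => ->; rewrite orbT.
apply: (le_trans _ (H j m jr)); rewrite lez_nat /cnt; apply: subset_leq_card.
apply/subsetP => w win.
case: (swap_sub vu win) => [//|[_ [gm rng]]].
by move: nc; rewrite gm eqxx rng.
Qed.

Lemma swap_feas_same (U : finType) (t : nat) (grp : U -> 'I_t) (ub : nat -> 'I_t -> int)
  (r : ranking U) u v :
  feasible grp ub r -> (r v < r u)%N -> grp u = grp v ->
  feasible grp ub (swapr r u v).
Proof.
move=> /feasP [ir H] vu guv; apply/feasP; split; first exact: swap_inj.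
move=> j m jr.
case: (boolP ((grp u == m) && (r v < j <= r u)%N)) => [/andP [/eqP gm /andP [lj ju]]|nc].
  apply: (le_trans _ (H j m jr)); rewrite lez_nat /cnt.
  set S := [set w | _ & (rk r w <= j)%N].
  have vS : v \in S by rewrite !inE -guv gm eqxx /rk lj.
  rewrite (cardsD1 v S) vS add1n.
  apply: (@leq_trans #|u |: (S :\ v)|); last by rewrite cardsU1; case: (u \in S :\ v).
  apply: subset_leq_card; apply/subsetP => w win.
  case: (swap_sub vu win) => [h|[-> _]]; rewrite !inE ?eqxx //.
  case: (eqVneq w v) win => [->|wv] win.
  2: by move: h; rewrite !inE => ->; rewrite orbT.
  move: win; rewrite !inE /rk swapE /tp eqxx.
  case: (eqVneq v u) => [e|_]; first by move: vu; rewrite e ltnn.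
  by case/andP => _; rewrite ltnNge ju.
apply: (le_trans _ (H j m jr)); rewrite lez_nat /cnt; apply: subset_leq_card.
apply/subsetP => w win.
case: (swap_sub vu win) => [//|[_ [gm rng]]].
by move: nc; rewrite gm eqxx rng.
Qed.

Definition cntL (U : finType) (L : {set U}) (r : ranking U) (j : nat) :=
  #|[set w in L | (r w < j)%N]|.

Lemma rank_surj (U : finType) (r : ranking U) : injective r ->
  forall i : 'I_#|U|, exists w, r w = i.
Proof.
move=> ir i.
have [g rg gr] : bijective r by apply: inj_card_bij => //; rewrite card_ord.
by exists (g i); rewrite gr.
Qed.

Lemma cntL_succ_le (U : finType) (L : {set U}) (s : ranking U) v i :
  injective s -> nat_of_ord (s v) = i -> (cntL L s i.+1 <= (cntL L s i).+1)%N.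
Proof.
move=> hs sv; rewrite /cntL.
apply: (@leq_trans #|v |: [set w in L | (s w < i)%N]|); last first.
  by rewrite cardsU1; case: (v \in _).
apply: subset_leq_card; apply/subsetP => w; rewrite !inE => /andP [wL].
rewrite ltnS leq_eqVlt => /orP [/eqP e|lt]; last by rewrite wL lt orbT.
by apply/orP; left; apply/eqP; apply: hs; apply: val_inj; rewrite /= e sv.
Qed.

Lemma cntL_succ_in (U : finType) (L : {set U}) (s : ranking U) v i :
  v \in L -> nat_of_ord (s v) = i -> ((cntL L s i).+1 <= cntL L s i.+1)%N.
Proof.
move=> vL sv; rewrite /cntL.
have nin : v \notin [set w in L | (s w < i)%N] by rewrite inE vL sv ltnn.
have e : #|v |: [set w in L | (s w < i)%N]| = (#|[set w in L | (s w < i)%N]|).+1.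
  by rewrite cardsU1 nin.
rewrite -e.
apply: subset_leq_card; apply/subsetP => w; rewrite !inE => /orP [/eqP ->|/andP [wL lt]].
  by rewrite vL sv ltnSn.
by rewrite wL ltnS ltnW.
Qed.

Lemma cntL_big (U : finType) (L : {set U}) (s : ranking U) j :
  (#|U| <= j)%N -> cntL L s j = #|L|.
Proof.
move=> h; rewrite /cntL.
have -> : [set w in L | (s w < j)%N] = L.
  by apply/setP => w; rewrite inE (leq_trans (ltn_ord (s w)) h) andbT.
by [].
Qed.

Lemma card_split (U : finType) (t : nat) (grp : U -> 'I_t) (A : {set U}) :
  #|A| = (\sum_(k < t) #|[set w in A | grp w == k]|)%N.
Proof.
rewrite -sum1_card (partition_big grp xpredT) //=.
apply: eq_bigr => k _; rewrite -sum1_card.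
by apply: eq_bigl => w; rewrite inE.
Qed.

Lemma OS (U : finType) (t : nat) (grp : U -> 'I_t) (ub : nat -> 'I_t -> int)
  (L : {set U}) (r rs : ranking U) :
  feasible grp ub r -> feasible grp ub rs ->
  (exists j, (cntL L r j < cntL L rs j)%N) ->
  exists u, exists v,
    [/\ u \in L, v \notin L, (r v < r u)%N & feasible grp ub (swapr r u v)].
Proof.
move=> fr frs ex.
have [ir Hr] := (feasP grp ub r).1 fr.
have [irs Hrs] := (feasP grp ub rs).1 frs.
case: (boolP [exists u, exists w,
   [&& u \in L, w \notin L, grp w == grp u & (r w < r u)%N]]).
  case/existsP => u /existsP [w /and4P [uL wL /eqP g lt]].
  exists u, w; split => //; exact: swap_feas_same.
move=> /existsPn nA.
have H : forall u w, u \in L -> w \notin L -> grp w = grp u -> (r u < r w)%N.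
  move=> u w uL wL g; have := nA u; move/existsPn/(_ w).
  rewrite uL wL g eqxx /= -leqNgt leq_eqVlt => /orP [/eqP e|//].
  have ewu : w = u by apply: ir; apply: val_inj.
  by move: wL; rewrite ewu uL.
case: (ex_minnP ex) => i hi imin.
case: i hi imin => [|i'] hi imin.
  by move: hi; rewrite /cntL (_ : [set w in L | (rs w < 0)%N] = set0) ?cards0 //;
     apply/setP => w; rewrite !inE ltn0 andbF.
case: (ltnP i' #|U|) => [i'n|ni']; last first.
  move: hi; rewrite (cntL_big L r (leq_trans ni' (leqnSn _))) ltnNge.
  by rewrite subset_leq_card //; apply/subsetP => w; rewrite inE => /andP [].
have [v rv] := rank_surj ir (Ordinal i'n).
have [vs rsv] := rank_surj irs (Ordinal i'n).
have rv' : nat_of_ord (r v) = i' by rewrite rv.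
have rsv' : nat_of_ord (rs vs) = i' by rewrite rsv.
have hprev : (cntL L rs i' <= cntL L r i')%N.
  by rewrite leqNgt; apply/negP => /imin; rewrite ltnn.
have vL : v \notin L.
  apply/negP => vL.
  have h1 := cntL_succ_in vL rv'.
  have h2 := cntL_succ_le L irs rsv'.
  move: hi; rewrite ltnNge; move/negP; apply.
  apply: leq_trans h2 _; apply: leq_trans h1; by rewrite ltnS.
pose Ar := [set w in L | (r w < i'.+1)%N].
pose Ars := [set w in L | (rs w < i'.+1)%N].
case: (boolP [exists k, (#|[set w in Ar | grp w == k]| < #|[set w in Ars | grp w == k]|)%N]);
  last first.
  move=> /existsPn nk; move: hi; rewrite /cntL -/Ar -/Ars (card_split grp Ar) (card_split grp Ars).
  rewrite ltnNge => /negP []; apply: leq_sum => k _.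
  by rewrite leqNgt; apply: nk.
case/existsP => k hk.
case: (boolP [exists u, [&& u \in L, grp u == k & (i'.+1 <= r u)%N]]); last first.
  move=> /existsPn nu; move: hk; rewrite ltnNge => /negP [].
  apply: (@leq_trans #|[set w in L | grp w == k]|).
    apply: subset_leq_card; apply/subsetP => w; rewrite !inE => /andP [/andP [-> _] ->] //.
  apply: subset_leq_card; apply/subsetP => w; rewrite !inE => /andP [wL gk].
  rewrite wL gk andbT /=; have := nu w; rewrite wL gk /= -ltnNge; by [].
case/existsP => u0 Pu0.
case: (@arg_minnP U u0 (fun u => [&& u \in L, grp u == k & (i'.+1 <= r u)%N]) (fun u => nat_of_ord (r u)) Pu0) => u /and3P [uL /eqP gu iu] umin.
have vu : (r v < r u)%N by rewrite rv'.
exists u, v; split => //.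
apply: swap_feas_up => // j /andP [vj ju].
rewrite rv' in vj.
have jpos : (0 < j <= #|U|)%N.
  by rewrite (leq_trans _ vj) //= (leq_trans ju) // ltnW.
rewrite gu; apply: (le_trans _ (Hrs j k jpos)); rewrite lez_nat.
apply: (@leq_trans (#|[set w in Ar | grp w == k]|).+1).
  rewrite ltnS /cnt; apply: subset_leq_card; apply/subsetP => w; rewrite !inE => /andP [gk lt].
  rewrite /rk in lt.
  have wi : (r w < i'.+1)%N.
    rewrite ltnNge; apply/negP => iw.
    case wL: (w \in L).
      have := umin w; rewrite wL gk iw => /(_ isT) uw.
      by move: (leq_trans lt ju); rewrite ltnNge uw.
    have := H u w uL (negbT wL) (etrans (eqP gk) (esym gu)).
    by rewrite ltnNge (ltnW (leq_trans lt ju)).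
  rewrite gk andbT wi andbT; apply/negPn/negP => wL.
  have := H u w uL wL (etrans (eqP gk) (esym gu)).
  by rewrite ltnNge (ltnW (leq_trans wi iu)).
apply: (leq_trans hk); apply: subset_leq_card; apply/subsetP => w; rewrite !inE.
case/andP => /andP [_ lt] ->; rewrite /rk /=; exact: leq_trans lt vj.
Qed.

Lemma swap_other (U : finType) (r : ranking U) u v w : w != u -> w != v -> swapr r u v w = r w.
Proof. by move=> wu wv; rewrite swapE /tp (negPf wu) (negPf wv). Qed.

Lemma swap_u (U : finType) (r : ranking U) u v : swapr r u v u = r v.
Proof. by rewrite swapE /tp eqxx. Qed.

Lemma swap_measure (U : finType) (L : {set U}) (r : ranking U) u v :
  u \in L -> v \notin L -> (r v < r u)%N ->
  (\sum_(w in L) nat_of_ord (swapr r u v w) < \sum_(w in L) nat_of_ord (r w))%N.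
Proof.
move=> uL vL vu.
rewrite (bigD1 u uL) [X in (_ < X)%N](bigD1 u uL) /= swap_u.
have -> : (\sum_(i in L | i != u) nat_of_ord (swapr r u v i) =
           \sum_(i in L | i != u) nat_of_ord (r i))%N.
  apply: eq_bigr => w /andP [wL wu]; rewrite swap_other //.
  by apply: contraTneq wL => ->.
by rewrite ltn_add2r.
Qed.

Lemma swap_le (U : finType) (L : {set U}) (r : ranking U) u v w :
  v \notin L -> (r v < r u)%N -> w \in L -> (swapr r u v w <= r w)%N.
Proof.
move=> vL vu wL.
case: (eqVneq w u) => [->|wu]; first by rewrite swap_u ltnW.
rewrite swap_other //; apply: contraTneq wL => ->; exact: vL.
Qed.

Lemma IL (U : finType) (t : nat) (grp : U -> 'I_t) (ub : nat -> 'I_t -> int)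
  (L : {set U}) (rs : ranking U) :
  feasible grp ub rs -> forall r, feasible grp ub r ->
  exists q, [/\ feasible grp ub q, (forall w, w \in L -> (q w <= r w)%N) &
               (forall j, (cntL L rs j <= cntL L q j)%N)].
Proof.
move=> frs r.
move: {2}(\sum_(w in L) nat_of_ord (r w))%N (leqnn (\sum_(w in L) nat_of_ord (r w))%N) => N.
elim: N r => [|N IH] r hN fr.
  case: (boolP [forall j : 'I_(#|U|.+1), (cntL L rs j <= cntL L r j)%N]) => [/forallP hall|].
    exists r; split => // j; case: (leqP j #|U|) => [jn|nj].
      exact: (hall (Ordinal (jn : (j < #|U|.+1)%N))).
    by rewrite !cntL_big ?(ltnW nj).
  move=> /forallPn [j]; rewrite -ltnNge => hj.
  have [u [v [uL vL vu fr']]] := OS fr frs (ex_intro _ (nat_of_ord j) hj).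
  by move: (leq_trans (swap_measure uL vL vu) hN); rewrite ltn0.
case: (boolP [forall j : 'I_(#|U|.+1), (cntL L rs j <= cntL L r j)%N]) => [/forallP hall|].
  exists r; split => // j; case: (leqP j #|U|) => [jn|nj].
    exact: (hall (Ordinal (jn : (j < #|U|.+1)%N))).
  by rewrite !cntL_big ?(ltnW nj).
move=> /forallPn [j]; rewrite -ltnNge => hj.
have [u [v [uL vL vu fr']]] := OS fr frs (ex_intro _ (nat_of_ord j) hj).
have hN' := leq_trans (swap_measure uL vL vu) hN; rewrite ltnS in hN'.
have [q [fq qr qc]] := IH _ hN' fr'.
exists q; split => //.
move=> w wL; apply: (leq_trans (qr w wL)); exact: (swap_le vL vu wL).
Qed.

Lemma f_layer (R : realFieldType) (f : nat -> R) (n p : nat) :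
  (1 <= p <= n)%N ->
  f p = f n + \sum_(1 <= i < n) (if (p <= i)%N then f i - f i.+1 else 0).
Proof.
move=> /andP [p1 pn].
rewrite (@big_cat_nat _ _ _ p 1 n _ _ p1 pn) /= big_nat_cond big1 ?add0r; last first.
  by move=> i /andP [/andP [_ ip] _]; rewrite leqNgt ip.
rewrite big_nat_cond (eq_bigr (fun i => f i - f i.+1)); last first.
  by move=> i /andP [/andP [-> _] _].
rewrite -big_nat_cond.
have -> : \sum_(p <= i < n) (f i - f i.+1) = - \sum_(p <= i < n) (f i.+1 - f i).
  by rewrite -sumrN; apply: eq_bigr => i _; rewrite opprB.
rewrite telescope_sumr //; lra.
Qed.

Lemma fsum_cnt (R : realFieldType) (U : finType) (f : nat -> R) (L : {set U})
  (q s : ranking U) :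
  (forall i j : nat, (1 <= i)%N -> (i <= j)%N -> (j <= #|U|)%N -> f j <= f i) ->
  (forall j, (cntL L s j <= cntL L q j)%N) ->
  \sum_(w in L) f (rk s w) <= \sum_(w in L) f (rk q w).
Proof.
move=> hf hc.
have rkr : forall (r : ranking U) w, (1 <= rk r w <= #|U|)%N.
  by move=> r w; rewrite /rk ltn_ord.
pose d i := f i - f i.+1.
have E : forall r : ranking U, \sum_(w in L) f (rk r w) =
    \sum_(w in L) f #|U| + \sum_(1 <= i < #|U|) d i * (cntL L r i)%:R.
  move=> r.
  rewrite (eq_bigr (fun w => f #|U| + \sum_(1 <= i < #|U|) (if (rk r w <= i)%N then d i else 0)));
    last by move=> w _; apply: f_layer.
  rewrite big_split /=; congr (_ + _).
  rewrite exchange_big /=; apply: eq_bigr => i _.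
  rewrite -big_mkcondr /= sumr_const mulr_natr; congr (_ *+ _).
  by rewrite /cntL; apply: eq_card => w; rewrite !inE.
rewrite !E lerD2l; apply: ler_sum_nat => i /andP [i1 iN].
apply: ler_wpM2l; last by rewrite ler_nat.
rewrite /d subr_ge0; apply: hf => //; exact: ltnW.
Qed.
Definition mv (R : realFieldType) (U : finType) (F : {ffun ranking U -> R}) (r q : ranking U)
  : {ffun ranking U -> R} :=
  [ffun s => F s + (if s == q then F r else 0) - (if s == r then F r else 0)].

Lemma sum_ite (R : realFieldType) (T : finType) (q : T) (a : R) :
  \sum_(s : T) (if s == q then a else 0) = a.
Proof. by rewrite -big_mkcond /= big_pred1_eq. Qed.

Lemma mv_distr (R : realFieldType) (U : finType) (S : pred (ranking U))
  (F : {ffun ranking U -> R}) r q :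
  distr_over S F -> S q -> distr_over S (mv F r q).
Proof.
move=> [h0 [h1 h2]] Sq; split; [|split].
- move=> s; rewrite ffunE; have := h0 s; have := h0 r.
  case: (eqVneq s r) => [->|_]; case: (eqVneq _ q) => _; lra.
- rewrite /mv (eq_bigr (fun s => F s + ((if s == q then F r else 0) - (if s == r then F r else 0))));
    last by move=> s _; rewrite ffunE addrA.
  by rewrite big_split /= sumrB !sum_ite subrr addr0.
- move=> s; rewrite ffunE.
  case: (eqVneq s q) => [->//|_].
  case: (eqVneq (F s) 0) => [Fs0|Fs]; last by move=> _; apply: h2.
  case: (eqVneq s r) => [e|_]; last by rewrite Fs0 !addr0 subr0 eqxx.
  by move: Fs0; rewrite e => ->; rewrite !addr0 subrr eqxx.
Qed.

Lemma mv_expv (R : realFieldType) (U : finType) (f : nat -> R) (g : U -> R)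
  (F : {ffun ranking U -> R}) r q w :
  expv f g (mv F r q) w = expv f g F w + F r * (value f g q w - value f g r w).
Proof.
rewrite /expv (eq_bigr (fun s => F s * value f g s w +
   ((if s == q then F r * value f g q w else 0) - (if s == r then F r * value f g r w else 0)))).
  by rewrite big_split /= sumrB !sum_ite; ring.
move=> s _; rewrite ffunE.
case: (eqVneq s q) => [->|_]; case: (eqVneq _ r) => [->|_]; ring.
Qed.

Lemma stepC_rank (R : realFieldType) (U : finType) (t : nat)
  (grp : U -> 'I_t) (ub : nat -> 'I_t -> int) (f : nat -> R) (g : U -> R)
  (F : {ffun ranking U -> R}) (lam : R) (r rs : ranking U) :
  (forall i j : nat, (1 <= i)%N -> (i <= j)%N -> (j <= #|U|)%N -> f j <= f i) ->
  distr_over (feasible grp ub) F ->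
  maxmin_fair (feasible grp ub) f g F ->
  F r != 0 -> feasible grp ub rs ->
  \sum_(w in [set u | expv f g F u <= lam]) f (rk rs w) <=
  \sum_(w in [set u | expv f g F u <= lam]) f (rk r w).
Proof.
move=> hf dF mF Fr frs.
set L := [set u | expv f g F u <= lam].
have fr : feasible grp ub r by case: dF => _ [_ h]; apply: h.
have [q [fq qr qc]] := IL L frs fr.
apply: le_trans (fsum_cnt hf qc) _.
have rkr : forall (s : ranking U) w, (1 <= rk s w <= #|U|)%N.
  by move=> s w; rewrite /rk ltn_ord.
have pw : forall w, w \in L -> f (rk r w) <= f (rk q w).
  move=> w wL; have /andP [a _] := rkr q w; have /andP [_ b] := rkr r w.
  by apply: hf => //; rewrite /rk ltnS qr.
rewrite leNgt; apply/negP => hlt.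
have [u uL ult] : exists2 u, u \in L & f (rk r u) < f (rk q u).
  apply/exists_inP; apply: contraTT hlt => /exists_inPn H.
  rewrite -leNgt; apply: ler_sum => w wL; have := H w wL; rewrite -leNgt; by [].
have Fpos : 0 < F r by case: dF => h _; rewrite lt_def Fr h.
have dF' := mv_distr r dF fq.
have hu : expv f g F u < expv f g (mv F r q) u.
  rewrite mv_expv ltrDl; apply: mulr_gt0 => //; rewrite /value; lra.
have [w [hw1 hw2]] := mF _ dF' u hu.
have wL : w \in L.
  rewrite inE; move: uL; rewrite inE => uL; exact: le_trans hw2 uL.
move: hw1; rewrite mv_expv; apply/negP; rewrite -leNgt lerDl.
apply: mulr_ge0; first exact: ltW.
have := pw w wL; rewrite /value; lra.
Qed.

Lemma sumL_expv (R : realFieldType) (U : finType) (f : nat -> R) (g : U -> R)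
  (D : {ffun ranking U -> R}) (L : {set U}) :
  \sum_(w in L) expv f g D w =
  \sum_s D s * (\sum_(w in L) f (rk s w)) - (\sum_s D s) * \sum_(w in L) g w.
Proof.
rewrite /expv exchange_big /= mulr_suml -sumrB; apply: eq_bigr => s _.
rewrite !mulr_sumr -sumrB; apply: eq_bigr => w _; rewrite /value; ring.
Qed.

Lemma stepC (R : realFieldType) (U : finType) (t : nat)
  (grp : U -> 'I_t) (ub : nat -> 'I_t -> int) (f : nat -> R) (g : U -> R)
  (F D : {ffun ranking U -> R}) (lam : R) :
  (forall i j : nat, (1 <= i)%N -> (i <= j)%N -> (j <= #|U|)%N -> f j <= f i) ->
  distr_over (feasible grp ub) F ->
  maxmin_fair (feasible grp ub) f g F ->
  distr_over (feasible grp ub) D ->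
  \sum_(w | expv f g F w <= lam) expv f g D w <=
  \sum_(w | expv f g F w <= lam) expv f g F w.
Proof.
move=> hf dF mF dD.
set L := [set u | expv f g F u <= lam].
have eL : forall h : U -> R, \sum_(w | expv f g F w <= lam) h w = \sum_(w in L) h w.
  by move=> h; apply: eq_bigl => w; rewrite inE.
rewrite !eL !sumL_expv.
have [F0 [F1 F2]] := dF; have [D0 [D1 D2]] := dD.
rewrite F1 D1 lerD2r.
pose A s := \sum_(w in L) f (rk s w).
pose M := \sum_r F r * A r.
have hA : forall s, D s != 0 -> A s <= M.
  move=> s Ds.
  have -> : A s = \sum_r F r * A s by rewrite -mulr_suml F1 mul1r.
  apply: ler_sum => r _.
  case: (eqVneq (F r) 0) => [->|Fr]; first by rewrite !mul0r.
  apply: ler_wpM2l => //; apply: (stepC_rank lam hf dF mF Fr); exact: D2.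
apply: (@le_trans _ _ (\sum_s D s * M)).
  apply: ler_sum => s _.
  case: (eqVneq (D s) 0) => [->|Ds]; first by rewrite !mul0r.
  by apply: ler_wpM2l => //; apply: hA.
by rewrite -mulr_suml D1 mul1r.
Qed.

Lemma sum_rank (R : realFieldType) (U : finType) (f : nat -> R) (s : ranking U) :
  injective s -> \sum_u f (rk s u) = \sum_(i < #|U|) f i.+1.
Proof.
move=> hs.
have bs : bijective s by apply: inj_card_bij; [exact: hs | rewrite card_ord].
by rewrite (reindex s (onW_bij _ bs)).
Qed.

Lemma total_expv (R : realFieldType) (U : finType) (t : nat)
  (grp : U -> 'I_t) (ub : nat -> 'I_t -> int) (f : nat -> R) (g : U -> R)
  (D : {ffun ranking U -> R}) :
  distr_over (feasible grp ub) D ->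
  \sum_u expv f g D u = \sum_(i < #|U|) f i.+1 - \sum_u g u.
Proof.
move=> [D0 [D1 D2]].
have := sumL_expv f g D [set: U].
have eT : forall h : U -> R, \sum_(w in [set: U]) h w = \sum_w h w.
  by move=> h; apply: eq_bigl => w; rewrite in_setT.
rewrite !eT D1 mul1r => ->; congr (_ - _).
rewrite (eq_bigr (fun s => D s * \sum_(i < #|U|) f i.+1)).
  by rewrite -mulr_suml D1 mul1r.
move=> s _; case: (eqVneq (D s) 0) => [->|Ds]; first by rewrite !mul0r.
rewrite eT sum_rank //.
by have /feasP [] := D2 s Ds.
Qed.

Unset Implicit Arguments.

Theorem mainTheorem4 (R : realFieldType) (U : finType) (t : nat)
  (grp : U -> 'I_t) (ub : nat -> 'I_t -> int)
  (Rel : U -> R) (f : nat -> R) (g : U -> R) (phi : R -> R)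
  (F : {ffun ranking U -> R}) :
  injective Rel ->
  (forall i j : nat, (1 <= i)%N -> (i <= j)%N -> (j <= #|U|)%N -> f j <= f i) ->
  (forall u v : U, Rel v <= Rel u -> g v <= g u) ->
  (exists r : ranking U, feasible grp ub r) ->
  concave phi ->
  distr_over (feasible grp ub) F ->
  maxmin_fair (feasible grp ub) f g F ->
  forall D : {ffun ranking U -> R}, distr_over (feasible grp ub) D ->
    \sum_(u : U) phi (expv f g D u) <= \sum_(u : U) phi (expv f g F u).
Proof.
move=> _ hf _ _ hc dF mF D dD.
apply: stepB => //.
  by rewrite (total_expv f g dD) (total_expv f g dF).
move=> w; exact: (stepC (expv f g F w) hf dF mF dD).
Qed.
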